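(* Let $(X,p)$ be a complete partial metric space and $(Y,h)$ a partial metric space, and let $f,g:X\to Y$ be sequentially continuous and consistent. Suppose there are real numbers $r$, $A\ge0$ and $0<c<1$ such that for every $x\in X$ there exists $z\in X$ with $$h(f(z),g(z))-h(f(z),f(z))\le c[h(f(x),g(x))-h(f(x),f(x))],\qquad h(f(z),g(z))-h(g(z),g(z))\le c[h(f(x),g(x))-h(g(x),g(x))],$$ $$r\le p(z,z)\le p(x,z)\le r+A[h(f(x),g(x))-h(f(x),f(x))],\qquad r\le p(z,z)\le p(x,z)\le r+A[h(f(x),g(x))-h(g(x),g(x))]$$ (i.e. $f$ and $g$ are $(f,g)$-mutually $c_r$-contractive). Then $f$ and $g$ have a coincidence point, i.e. there is $a\in X$ with $f(a)=g(a)$.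
   Context: A partial metric on a set $Z$ is $q:Z\times Z\to\mathbb{R}$ with, for all $x,y,z$: $q(x,x)\le q(x,y)$; $q(x,y)=q(y,x)$; $q(x,x)=q(x,y)=q(y,y)$ iff $x=y$; $q(x,y)\le q(x,z)+q(z,y)-q(z,z)$. Each partial metric space carries the topology generated by the balls $\{y\mid q(x,y)-q(x,x)<\epsilon\}$, so $a$ is a limit of $\{x_i\}$ iff for every $\epsilon>0$ there is $N$ with $q(a,x_i)-q(a,a)<\epsilon$ for all $i>N$. $\{x_i\}$ is Cauchy with central distance $r$ if for every $\epsilon>0$ there is $N$ with $|q(x_i,x_j)-r|<\epsilon$ for $i\ge j>N$; a special limit is a limit $a$ with $q(a,a)=r$; the space is complete if every Cauchy sequence has a special limit. $f:X\to Y$ is sequentially continuous if whenever $a$ is a limit of $\{x_i\}$ in $X$, $f(a)$ is a limit of $\{f(x_i)\}$ in $Y$. $f$ is consistent if for all $x,z\in X$, $p(x,x)\le p(z,z)$ implies $h(f(x),f(x))\le h(f(z),f(z))$. *)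

(* Defs.v *)
From Stdlib Require Import Reals Lra Lia.
Open Scope R_scope.

Definition is_partial_metric {Z : Type} (q : Z -> Z -> R) : Prop :=
  (forall x y, q x x <= q x y) /\
  (forall x y, q x y = q y x) /\
  (forall x y, (q x x = q x y /\ q x y = q y y) <-> x = y) /\
  (forall x y z, q x y <= q x z + q z y - q z z).

Definition pm_limit {Z : Type} (q : Z -> Z -> R) (xs : nat -> Z) (a : Z) : Prop :=
  forall eps, 0 < eps -> exists N : nat, forall i : nat, (i > N)%nat ->
    q a (xs i) - q a a < eps.

Definition pm_cauchy {Z : Type} (q : Z -> Z -> R) (xs : nat -> Z) (r : R) : Prop :=
  forall eps, 0 < eps -> exists N : nat, forall i j : nat, (i >= j)%nat -> (j > N)%nat ->
    Rabs (q (xs i) (xs j) - r) < eps.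

Definition pm_special_limit {Z : Type} (q : Z -> Z -> R) (xs : nat -> Z) (r : R) (a : Z) : Prop :=
  pm_limit q xs a /\ q a a = r.

Definition pm_complete {Z : Type} (q : Z -> Z -> R) : Prop :=
  forall (xs : nat -> Z) (r : R), pm_cauchy q xs r -> exists a, pm_special_limit q xs r a.

Definition seq_continuous {X Y : Type} (p : X -> X -> R) (h : Y -> Y -> R) (f : X -> Y) : Prop :=
  forall (xs : nat -> X) (a : X), pm_limit p xs a -> pm_limit h (fun i => f (xs i)) (f a).

Definition pm_consistent {X Y : Type} (p : X -> X -> R) (h : Y -> Y -> R) (f : X -> Y) : Prop :=
  forall x z : X, p x x <= p z z -> h (f x) (f x) <= h (f z) (f z).

Definition mutually_contractive {X Y : Type} (p : X -> X -> R) (h : Y -> Y -> R)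
  (f g : X -> Y) (r A c : R) : Prop :=
  forall x : X, exists z : X,
    h (f z) (g z) - h (f z) (f z) <= c * (h (f x) (g x) - h (f x) (f x)) /\
    h (f z) (g z) - h (g z) (g z) <= c * (h (f x) (g x) - h (g x) (g x)) /\
    r <= p z z /\ p z z <= p x z /\ p x z <= r + A * (h (f x) (g x) - h (f x) (f x)) /\
    p x z <= r + A * (h (f x) (g x) - h (g x) (g x)).

(* Main.v *)
Require Import Defs.
From Stdlib Require Import Reals Lra Lia ClassicalEpsilon.
Open Scope R_scope.

Lemma small_le (Q : R) : (forall eps, 0 < eps -> Q < eps) -> Q <= 0.
Proof.
  intros H. destruct (Rle_dec Q 0) as [h|h]; [exact h|].
  apply Rnot_le_lt in h. specialize (H Q h). lra.
Qed.

Theorem theorem7p11 (X Y : Type) (p : X -> X -> R) (h : Y -> Y -> R)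
  (f g : X -> Y) (r A c : R) :
  inhabited X ->
  is_partial_metric p -> is_partial_metric h -> pm_complete p ->
  seq_continuous p h f -> seq_continuous p h g ->
  pm_consistent p h f -> pm_consistent p h g ->
  0 <= A -> 0 < c -> c < 1 ->
  mutually_contractive p h f g r A c ->
  exists a : X, f a = g a.
Proof.
  intros [w] Hp Hh Hcomp Hfc Hgc Hfcon Hgcon HA Hc0 Hc1 Hmc.
  destruct Hp as [p1 [p2 [p3 p4]]]. destruct Hh as [h1 [h2 [h3 h4]]].
  pose (z := fun x => proj1_sig (constructive_indefinite_description _ (Hmc x))).
  assert (Hz : forall x,
    h (f (z x)) (g (z x)) - h (f (z x)) (f (z x)) <= c * (h (f x) (g x) - h (f x) (f x)) /\
    h (f (z x)) (g (z x)) - h (g (z x)) (g (z x)) <= c * (h (f x) (g x) - h (g x) (g x)) /\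
    r <= p (z x) (z x) /\ p (z x) (z x) <= p x (z x) /\
    p x (z x) <= r + A * (h (f x) (g x) - h (f x) (f x)) /\
    p x (z x) <= r + A * (h (f x) (g x) - h (g x) (g x))).
  { intro x. unfold z. destruct (constructive_indefinite_description _ (Hmc x)) as [y Hy].
    exact Hy. }
  pose (s := fun n => nat_rect (fun _ => X) (z w) (fun _ y => z y) n).
  assert (HsS : forall n, s (S n) = z (s n)) by reflexivity.
  assert (Hr : forall n, r <= p (s n) (s n)).
  { intro n; destruct n; [apply (Hz w)| rewrite HsS; apply (Hz (s n))]. }
  set (D0 := h (f (s 0%nat)) (g (s 0%nat)) - h (f (s 0%nat)) (f (s 0%nat))).
  set (E0 := h (f (s 0%nat)) (g (s 0%nat)) - h (g (s 0%nat)) (g (s 0%nat))).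
  assert (HD0 : 0 <= D0) by (unfold D0; pose proof (h1 (f (s 0%nat)) (g (s 0%nat))); lra).
  assert (HE0 : 0 <= E0).
  { unfold E0; pose proof (h1 (g (s 0%nat)) (f (s 0%nat))); rewrite (h2 (g _) (f _)) in H; lra. }
  assert (HD : forall n, h (f (s n)) (g (s n)) - h (f (s n)) (f (s n)) <= c ^ n * D0).
  { induction n; cbn [pow]; [unfold D0; lra|].
    destruct (Hz (s n)) as [H1 _]. rewrite HsS.
    apply Rmult_le_compat_l with (r := c) in IHn; lra. }
  assert (HE : forall n, h (f (s n)) (g (s n)) - h (g (s n)) (g (s n)) <= c ^ n * E0).
  { induction n; cbn [pow]; [unfold E0; lra|].
    destruct (Hz (s n)) as [_ [H1 _]]. rewrite HsS.
    apply Rmult_le_compat_l with (r := c) in IHn; lra. }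
  set (M := A * D0).
  assert (HM : 0 <= M) by (unfold M; nra).
  assert (Hstep : forall n, p (s n) (s (S n)) <= r + M * c ^ n).
  { intro n. destruct (Hz (s n)) as [_ [_ [_ [_ [H5 _]]]]]. rewrite HsS.
    pose proof (HD n). unfold M.
    assert (A * (h (f (s n)) (g (s n)) - h (f (s n)) (f (s n))) <= A * (c ^ n * D0))
      by (apply Rmult_le_compat_l; lra).
    lra. }
  assert (Hup : forall j k, p (s j) (s (j + S k)%nat) - r <= M * c ^ j * (1 - c ^ (S k)) / (1 - c)).
  { intros j k. induction k.
    - rewrite Nat.add_1_r. pose proof (Hstep j).
      replace (M * c ^ j * (1 - c ^ 1) / (1 - c)) with (M * c ^ j) by (simpl; field; lra). lra.
    - rewrite Nat.add_succ_r. pose proof (p4 (s j) (s (S (j + S k))) (s (j + S k)%nat)).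
      pose proof (Hstep (j + S k)%nat). pose proof (Hr (j + S k)%nat).
      rewrite pow_add in H0.
      assert (M * c ^ j * (1 - c ^ S k) / (1 - c) + M * (c ^ j * c ^ S k)
              = M * c ^ j * (1 - c ^ S (S k)) / (1 - c)) by (simpl; field; lra).
      lra. }
  assert (Hbound : forall i j, (i >= j)%nat -> p (s i) (s j) - r <= M * c ^ j / (1 - c)).
  { intros i j Hij. assert (Hcj : 0 <= c ^ j) by (apply pow_le; lra).
    assert (HT : M * c ^ j <= M * c ^ j / (1 - c)).
    { assert (M * c ^ j / (1 - c) * (1 - c) = M * c ^ j) by (field; lra).
      assert (0 <= M * c ^ j) by nra. nra. }
    destruct (Nat.eq_dec i j) as [->|Hne].
    - pose proof (p1 (s j) (s (S j))). pose proof (Hstep j). lra.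
    - replace i with (j + S (i - j - 1))%nat by lia. rewrite p2.
      pose proof (Hup j (i - j - 1)%nat).
      assert (0 <= c ^ S (i - j - 1)) by (apply pow_le; lra).
      assert (M * c ^ j * (1 - c ^ S (i - j - 1)) / (1 - c) <= M * c ^ j / (1 - c)).
      { unfold Rdiv. apply Rmult_le_compat_r.
        - apply Rlt_le, Rinv_0_lt_compat; lra.
        - assert (0 <= M * c ^ j) by nra. nra. }
      lra. }
  assert (Hcau : pm_cauchy p s r).
  { intros eps He.
    assert (Hac : Rabs c < 1) by (rewrite Rabs_pos_eq; lra).
    set (y := eps * (1 - c) / (M + 1)).
    assert (Hy : 0 < y) by (unfold y; apply Rdiv_lt_0_compat; nra).
    destruct (pow_lt_1_zero c Hac y Hy) as [N HN]. exists N. intros i j Hij HjN.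
    assert (Hcj : 0 <= c ^ j) by (apply pow_le; lra).
    specialize (HN j ltac:(lia)). rewrite Rabs_pos_eq in HN by exact Hcj.
    assert (Hy2 : (M + 1) * y = eps * (1 - c)) by (unfold y; field; lra).
    assert (M * c ^ j <= M * y) by (apply Rmult_le_compat_l; lra).
    assert (HT1 : M * c ^ j / (1 - c) * (1 - c) = M * c ^ j) by (field; lra).
    assert (HT : M * c ^ j / (1 - c) < eps) by nra.
    pose proof (Hbound i j Hij).
    assert (r <= p (s i) (s j)).
    { pose proof (p1 (s j) (s i)). rewrite (p2 (s j) (s i)) in H1. pose proof (Hr j). lra. }
    apply Rabs_def1; lra. }
  destruct (Hcomp s r Hcau) as [a [Hlim Haa]]. exists a.
  assert (Hfl := Hfc s a Hlim). assert (Hgl := Hgc s a Hlim). simpl in Hfl, Hgl.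
  assert (Key : forall eps, 0 < eps ->
     h (f a) (g a) - h (f a) (f a) < eps /\ h (f a) (g a) - h (g a) (g a) < eps).
  { intros eps He.
    destruct (Hfl (eps/3) ltac:(lra)) as [N1 HN1].
    destruct (Hgl (eps/3) ltac:(lra)) as [N2 HN2].
    assert (Hac : Rabs c < 1) by (rewrite Rabs_pos_eq; lra).
    set (y := eps / (3 * (D0 + E0 + 1))).
    assert (Hy : 0 < y) by (unfold y; apply Rdiv_lt_0_compat; lra).
    destruct (pow_lt_1_zero c Hac y Hy) as [N3 HN3].
    set (n := S (N1 + N2 + N3)).
    specialize (HN1 n ltac:(unfold n; lia)). specialize (HN2 n ltac:(unfold n; lia)).
    specialize (HN3 n ltac:(unfold n; lia)).
    assert (Hcn : 0 <= c ^ n) by (apply pow_le; lra).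
    rewrite Rabs_pos_eq in HN3 by exact Hcn.
    assert (Hy3 : y * (D0 + E0 + 1) = eps / 3) by (unfold y; field; lra).
    assert (c ^ n * D0 <= y * D0) by (apply Rmult_le_compat_r; lra).
    assert (c ^ n * E0 <= y * E0) by (apply Rmult_le_compat_r; lra).
    pose proof (HD n). pose proof (HE n).
    assert (Hpn : p a a <= p (s n) (s n)) by (rewrite Haa; apply Hr).
    pose proof (Hfcon a (s n) Hpn). pose proof (Hgcon a (s n) Hpn).
    pose proof (h4 (f a) (g a) (f (s n))).
    pose proof (h4 (f (s n)) (g a) (g (s n))) as T7.
    rewrite (h2 (g (s n)) (g a)) in T7.
    cbv beta in HN1, HN2.
    assert (y * D0 + y * E0 + y = eps / 3) by (rewrite <- Hy3; ring).
    assert (0 <= y * D0) by nra. assert (0 <= y * E0) by nra. split; lra. }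
  apply h3.
  assert (K1 : h (f a) (g a) - h (f a) (f a) <= 0) by (apply small_le; intros; apply Key; auto).
  assert (K2 : h (f a) (g a) - h (g a) (g a) <= 0) by (apply small_le; intros; apply Key; auto).
  pose proof (h1 (f a) (g a)). pose proof (h1 (g a) (f a)) as T0. rewrite (h2 (g a) (f a)) in T0.
  split; lra.
Qed.
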